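(* Let $n\ge 2$ and let $(G(k))_{k\in\mathbb{N}}$ be a sequence of digraphs on $\mathcal{V}=\{1,\dots,n\}$ with knowledge sets evolving by the flooding update described in the context. Define $$\psi(k)=\begin{cases} n & \text{if } k\le \lceil n/2\rceil-1,\\ n-k & \text{if } k\ge \lceil n/2\rceil.\end{cases}$$ If for every $k\in\{0,1,\dots,n-2\}$ the digraph $G(k)$ contains $\psi(k)(k)$ (i.e. every node $i\in\mathcal{V}$ has, at time $k$, a closed input-cord of cardinality greater than $\psi(k)-2$), then $|\mathcal{K}_i(k+1)|\ge k+2$ for all $i\in\mathcal{V}$ and all $k\in\{0,1,\dots,n-2\}$.
   Context: Network: $\mathcal{V}=\{1,\dots,n\}$; node $i$ holds initial data $d_i\in\mathbb{R}$, pairwise distinct. At discrete times $k\in\mathbb{N}$ communication follows digraph $G(k)=(\mathcal{V},\mathcal{E}(k))$; node $i$ sends to $j$ at time $k$ iff $(i,j)\in\mathcal{E}(k)$. Knowledge sets: $\mathcal{K}_i(0)=\{d_i\}$ and $\mathcal{K}_j(k+1)=\mathcal{K}_j(k)\cup\bigcup_{i:(i,j)\in\mathcal{E}(k)}\mathcal{K}_i(k)$. An input-cord to node $i$ at time $k$ is an ordered list $(\mathcal{I}^i_1,\dots,\mathcal{I}^i_m)$ of pairwise distinct nodes of $\mathcal{V}\setminus\{i\}$ with $(\mathcal{I}^i_j,\mathcal{I}^i_{j+1})\in\mathcal{E}(k)$ for $j=1,\dots,m-1$ and $(\mathcal{I}^i_m,i)\in\mathcal{E}(k)$; its cardinality is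 $m$. It is closed if moreover $(i,\mathcal{I}^i_1)\in\mathcal{E}(k)$. For an integer $\chi$, node $i$ is contained in a $\chi(k)$-cycle if it has at time $k$ a closed input-cord of cardinality greater than $\chi-2$; $G(k)$ contains $\chi(k)$ if every node of $\mathcal{V}$ is contained in a $\chi(k)$-cycle. *)

(* Defs.v *)
From HB Require Import structures.
From mathcomp Require Import all_boot all_order.
From mathcomp Require Import finmap.
Set Implicit Arguments. Unset Strict Implicit. Unset Printing Implicit Defensive.
Local Open Scope fset_scope.

(* Nodes are 'I_n; the communication digraph at time k is the relation E k,
   with (i,j) \in E(k) iff E k i j (i sends to j at time k). *)

Fixpoint know (D : choiceType) (n : nat) (E : nat -> rel 'I_n)
  (d : 'I_n -> D) (k : nat) (j : 'I_n) : {fset D} :=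
  match k with
  | 0 => [fset d j]
  | k'.+1 => know E d k' j `|`
             \big[fsetU/fset0]_(i : 'I_n | E k' i j) know E d k' i
  end.

Definition input_cord (n : nat) (E : nat -> rel 'I_n) (k : nat)
  (i : 'I_n) (s : seq 'I_n) : Prop :=
  match s with
  | [::] => False
  | x :: s' => [/\ uniq s, i \notin s, path (E k) x s' & E k (last x s') i]
  end.

Definition closed_input_cord (n : nat) (E : nat -> rel 'I_n) (k : nat)
  (i : 'I_n) (s : seq 'I_n) : Prop :=
  input_cord E k i s /\ E k i (head i s).

(* node i is contained in a chi(k)-cycle: it has a closed input-cord of
   cardinality m > chi - 2 (integer comparison, written m + 2 > chi). *)
Definition in_chi_cycle (n : nat) (E : nat -> rel 'I_n) (chi k : nat)
  (i : 'I_n) : Prop :=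
  exists s, closed_input_cord E k i s /\ (chi < size s + 2)%N.

Definition contains_chi (n : nat) (E : nat -> rel 'I_n) (chi k : nat) : Prop :=
  forall i : 'I_n, in_chi_cycle E chi k i.

Definition psi (n k : nat) : nat :=
  if (k <= uphalf n - 1)%N then n else n - k.

(* Main.v *)
Require Import Defs.
From mathcomp Require Import all_boot all_order.
From mathcomp Require Import finmap zify.
Local Open Scope fset_scope.
Set Implicit Arguments.

Lemma path_cross (T : eqType) (e : rel T) (P : pred T) x p :
  path e x p -> has (predC P) (x :: p) -> P (last x p) ->
  exists u v, [/\ ~~ P u, P v & e u v].
Proof.
elim: p x => [|y p IH] x /=.
  by rewrite orbF => _ /negP.
case/andP=> exy pp /orP [nPx|hp] Pl.
  case Py: (P y); first by exists x, y.
  by apply: (IH y pp) => //=; rewrite Py.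
exact: IH hp Pl.
Qed.

Fixpoint Rb n (E : nat -> rel 'I_n) (k : nat) (i : 'I_n) (s : nat) : {set 'I_n} :=
  match s with
  | 0 => [set i]
  | s'.+1 => Rb E k i s' :|: [set u | [exists v, (v \in Rb E k i s') && E (k - s') u v]]
  end.

Lemma know_mono (D : choiceType) n (E : nat -> rel 'I_n) (d : 'I_n -> D) t u :
  know E d t u `<=` know E d t.+1 u.
Proof. by rewrite /= fsubsetUl. Qed.

Lemma know_edge (D : choiceType) n (E : nat -> rel 'I_n) (d : 'I_n -> D) t u v :
  E t u v -> know E d t u `<=` know E d t.+1 v.
Proof.
move=> Euv /=; apply: fsubset_trans (fsubsetUr _ _).
by apply: bigfcup_sup => //; rewrite mem_index_enum.
Qed.

Lemma lemA (D : choiceType) n (E : nat -> rel 'I_n) (d : 'I_n -> D) k i s :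
  s <= k.+1 -> forall u, u \in Rb E k i s ->
  know E d (k.+1 - s) u `<=` know E d k.+1 i.
Proof.
elim: s => [|s IH] hs u /=.
  by rewrite in_set1 ?subn0 => /eqP ->.
have e : k.+1 - s = (k - s).+1 by rewrite subSn.
have e2 : k.+1 - s.+1 = k - s by rewrite subSS.
rewrite e2 in_setU => /orP [uR|].
  apply: fsubset_trans (IH (ltnW hs) u uR); rewrite e; exact: know_mono.
rewrite in_set => /existsP [v /andP [vR Euv]].
apply: fsubset_trans (IH (ltnW hs) v vR); rewrite e; exact: know_edge.
Qed.

Lemma growth n (E : nat -> rel 'I_n) chi t (S : {set 'I_n}) r :
  contains_chi E chi t -> r \in S -> #|S| < chi ->
  exists u v, [/\ u \notin S, v \in S & E t u v].
Proof.
move=> hc rS hS; case: (hc r) => s [[hcord _] hsz].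
case: s hcord hsz => [|x s'] //= [hu rn hp hl] hsz.
have hpath : path (E t) x (rcons s' r) by rewrite rcons_path hp.
have hhas : has (predC (mem S)) (x :: rcons s' r).
  rewrite has_predC; apply/negP => hall.
  have : size (r :: x :: s') <= size (enum S).
    apply: uniq_leq_size; first by rewrite /= rn hu.
    move=> z; rewrite inE => /orP [/eqP ->|zs]; first by rewrite mem_enum.
    rewrite mem_enum; move/allP: hall => /(_ z).
    apply; rewrite -cats1 -cat_cons mem_cat zs //.
  rewrite -cardE /= => h.
  move: hsz hS h; move: #|S| (size s') => a b; lia.
have := @path_cross _ _ _ _ _ hpath hhas; rewrite last_rcons => /(_ rS).
by move=> [u [v [nu hv huv]]]; exists u, v.
Qed.

Lemma lemB n (E : nat -> rel 'I_n) k i s :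
  k.+2 <= n -> (forall t, t <= k -> contains_chi E (psi n t) t) ->
  s <= k.+1 -> s.+1 <= #|Rb E k i s|.
Proof.
move=> hn hc; elim: s => [|s IH] hs; first by rewrite /= cards1.
have IH' := IH (ltnW hs).
have sub : Rb E k i s \subset Rb E k i s.+1 by rewrite /= subsetUl.
case: (ltnP s.+1 #|Rb E k i s|) => hle.
  exact: leq_trans hle (subset_leq_card sub).
have hpsi : #|Rb E k i s| < psi n (k - s).
  rewrite /psi; case: ifP => _; lia.
have [r rR] : exists r, r \in Rb E k i s.
  by apply/set0Pn; rewrite -card_gt0; lia.
have [u [v [nu vR Euv]]] := growth (hc _ (leq_subr _ _)) rR hpsi.
have : u |: Rb E k i s \subset Rb E k i s.+1.
  rewrite subUset sub andbT sub1set /= in_setU; apply/orP; right.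
  by rewrite in_set; apply/existsP; exists v; rewrite vR.
move/subset_leq_card; rewrite cardsU1 nu; lia.
Qed.

Theorem theorem1 (D : choiceType) (n : nat) (E : nat -> rel 'I_n)
  (d : 'I_n -> D) :
  (2 <= n)%N ->
  injective d ->
  (forall k : nat, (k <= n - 2)%N -> contains_chi E (psi n k) k) ->
  forall (i : 'I_n) (k : nat), (k <= n - 2)%N ->
    (k + 2 <= #|` know E d k.+1 i|)%N.
Proof.
move=> hn dinj hc i k hk.
have hk2 : k.+2 <= n by lia.
have hB := @lemB _ E k i k.+1 hk2 (fun t ht => hc t (leq_trans ht hk)) (leqnn k.+1).
set R := Rb E k i k.+1 in hB.
have : size (map d (enum R)) <= size (know E d k.+1 i).
  apply: uniq_leq_size; first by rewrite (map_inj_uniq dinj) enum_uniq.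
  move=> z /mapP [u]; rewrite mem_enum => uR ->.
  have := @lemA _ _ E d k i k.+1 (leqnn k.+1) _ uR; rewrite subnn => /fsubsetP; apply.
  by rewrite /= in_fset1.
rewrite size_map -cardE; move: hB; move: #|R| (#|` know E d k.+1 i|) => a b; lia.
Qed.
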